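(* Let $K=3$. For generic $H\in\mathbb{C}^{3\times 3}$ (that is, for all $H$ outside the zero set of some nonzero polynomial in the entries of $H$), there exist diagonal matrices $D_1,D_2,D_3\in\mathbb{C}^{3\times 3}$ such that, with $B := HD_2 + HD_3H^TD_1H$, the following hold for each $i\in\{1,2,3\}$: (i) $\dfrac{B_{ij}}{H_{ij}} = \dfrac{B_{ij'}}{H_{ij'}}$ for all $j,j'\neq i$; (ii) $\dfrac{B_{ii}}{H_{ii}} \neq \dfrac{B_{ij}}{H_{ij}}$ for all $j\neq i$.
   Context: Setting: a 3-user interference channel with forward channel matrix $H$ ($H_{ij}$ is the gain from source $s_j$ to destination $t_i$) and reciprocal feedback channel $G=H^T$, using a three-phase scheme: destinations receive $y=Hx$ in phase 1, sources receive $H^TD_1y$ in phase 2, and destinations receive $Bx$ in phase 3 (noise ignored), with diagonal coding matrices $D_1,D_2,D_3$. Condition (i) (interference alignment) and (ii) (desired signal preserved) allow each destination to cancel all interference by a linear combination of its phase-1 and phase-3 observations. *)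

(* Defs.v *)
From HB Require Import structures.
From mathcomp Require Import all_boot all_order all_algebra.
From mathcomp Require Import reals complex.
From mathcomp Require Import mpoly.
Set Implicit Arguments. Unset Strict Implicit. Unset Printing Implicit Defensive.
Import Order.TTheory GRing.Theory Num.Theory.
Local Open Scope ring_scope.

Definition mx_eval (F : fieldType) (p : {mpoly F[3 * 3]}) (H : 'M[F]_3) : F :=
  p.@[fun k : 'I_(3 * 3) => mxvec H 0 k].

Definition B_mx (F : fieldType) (H D1 D2 D3 : 'M[F]_3) : 'M[F]_3 :=
  H *m D2 + H *m D3 *m H^T *m D1 *m H.

(* Main.v *)
Require Import Defs.
From HB Require Import structures.
From mathcomp Require Import all_boot all_order all_algebra.
From mathcomp Require Import reals complex.
From mathcomp Require Import mpoly.
From mathcomp Require Import ring.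
Import GRing.Theory Num.Theory.
Local Open Scope ring_scope.

Notation o0 := (@Ordinal 3 0 isT).
Notation o1 := (@Ordinal 3 1 isT).
Notation o2 := (@Ordinal 3 2 isT).

Lemma ord3P (i : 'I_3) : i = o0 \/ i = o1 \/ i = o2.
Proof.
case: i => [[|[|[|m]]] Hm].
- by left; apply: val_inj.
- by right; left; apply: val_inj.
- by right; right; apply: val_inj.
- by [].
Qed.

Definition alp {R : comNzRingType} (x : 'I_3 -> 'I_3 -> R) :=
  x o0 o0 * x o2 o1 - x o2 o0 * x o0 o1.
Definition bet {R : comNzRingType} (x : 'I_3 -> 'I_3 -> R) :=
  x o0 o0 * x o1 o2 - x o1 o0 * x o0 o2.
Definition gam {R : comNzRingType} (x : 'I_3 -> 'I_3 -> R) :=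
  x o1 o0 * x o2 o1 - x o2 o0 * x o1 o1.
Definition del {R : comNzRingType} (x : 'I_3 -> 'I_3 -> R) :=
  x o2 o0 * x o1 o2 - x o1 o0 * x o2 o2.
Definition cc {R : comNzRingType} (x : 'I_3 -> 'I_3 -> R) l :=
  x l o0 * (alp x * x o0 o2 * x o1 o2 * x l o1 - bet x * x o0 o1 * x o2 o1 * x l o2).
Definition pp {R : comNzRingType} (x : 'I_3 -> 'I_3 -> R) j :=
  cc x o1 * x o0 o0 * x o0 j - cc x o0 * x o1 o0 * x o1 j.
Definition Pexpr {R : comNzRingType} (x : 'I_3 -> 'I_3 -> R) :=
  x o0 o0 * x o0 o1 * x o0 o2 * x o1 o0 * x o1 o1 * x o1 o2 *
  x o2 o0 * x o2 o1 * x o2 o2 * alp x * gam x * del x * pp x o1 * pp x o2.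

Lemma Pexpr_morph (R S : comNzRingType) (f : {rmorphism R -> S}) x y :
  (forall i j, f (x i j) = y i j) -> f (Pexpr x) = Pexpr y.
Proof.
move=> Hf; rewrite /Pexpr /pp /cc /alp /bet /gam /del.
by rewrite !(rmorphM, rmorphB) !Hf.
Qed.

Definition x0 (i j : 'I_3) : int :=
  nth 0 (nth [::] [:: [:: 1; 2; 3]; [:: 1; 1; 2]; [:: 2; 1; 1]] i) j.

Lemma Pexpr_x0 : Pexpr x0 != 0.
Proof. by vm_compute. Qed.

Section Main.
Variable F : fieldType.
Variable H : 'M[F]_3.

Definition d1 (l : 'I_3) : F :=
  match val l with 0 => cc H o1 | 1 => - cc H o0 | _ => 0 end.
Definition d3 (l : 'I_3) : F := match val l with 0 => 1 | _ => 0 end.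
Definition d2 (l : 'I_3) : F :=
  match val l with
  | 0 => - pp H o0
  | 1 => - (H o2 o0 * pp H o1 / H o2 o1)
  | _ => - (H o1 o0 * pp H o2 / H o1 o2) end.

Lemma Bent i j :
  B_mx H (diag_mx (\row_l d1 l)) (diag_mx (\row_l d2 l)) (diag_mx (\row_l d3 l)) i j
  = H i j * d2 j + H i o0 * pp H j.
Proof.
rewrite /B_mx !mul_mx_diag !mxE.
rewrite !big_ord_recl big_ord0 /=.
rewrite !mxE !big_ord_recl !big_ord0 /=.
rewrite !mxE /=.
have e2 : lift ord0 (lift ord0 ord0) = o2 :> 'I_3 by apply: val_inj.
have e1 : lift ord0 ord0 = o1 :> 'I_3 by apply: val_inj.
have e0 : ord0 = o0 :> 'I_3 by apply: val_inj.
rewrite e2 e1 e0 /d1 /d3 /= /pp /=.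
ring.
Qed.
End Main.
Arguments d1 {F} H l.
Arguments d2 {F} H l.
Arguments d3 {F} l.
Arguments Bent {F} H i j.

Ltac hsolve hH := repeat (apply/andP; split); repeat (apply: mulf_neq0); try apply: hH; try done.

Theorem theorem3 (R : realType) :
  exists P : {mpoly (complex R)[3 * 3]},
    P != 0 /\
    forall H : 'M[complex R]_3,
      mx_eval P H != 0 ->
      exists D1 D2 D3 : 'M[complex R]_3,
        [/\ is_diag_mx D1, is_diag_mx D2, is_diag_mx D3 &
        forall i : 'I_3,
          (forall j j' : 'I_3, j != i -> j' != i ->
             B_mx H D1 D2 D3 i j / H i j = B_mx H D1 D2 D3 i j' / H i j') /\
          (forall j : 'I_3, j != i ->
             B_mx H D1 D2 D3 i i / H i i != B_mx H D1 D2 D3 i j / H i j)].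
Proof.
pose P : {mpoly (complex R)[3 * 3]} := Pexpr (fun i j => 'X_(mxvec_index i j)).
have evP : forall H, mx_eval P H = Pexpr (fun_of_matrix H).
  move=> H; rewrite /mx_eval; apply: Pexpr_morph => i j.
  exact: (etrans (mevalXU _ _) (mxvecE _ _ _)).
exists P; split.
  apply/negP => /eqP P0.
  pose H0 : 'M[complex R]_3 := \matrix_(i, j) (x0 i j)%:~R.
  have : mx_eval P H0 = 0 by rewrite P0 /mx_eval meval0.
  rewrite evP (_ : Pexpr _ = (Pexpr x0)%:~R).
    by move/eqP; rewrite intr_eq0 (negbTE Pexpr_x0).
  by symmetry; apply: Pexpr_morph => i j; rewrite mxE.
move=> H; rewrite evP /Pexpr !mulf_eq0 !negb_or => HP.
repeat match goal with h : is_true (_ && _) |- _ => case/andP: h => ? ? end.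
have hH : forall i j, H i j != 0.
  by move=> i j; have [->|[->|->]] := ord3P i; have [->|[->|->]] := ord3P j.
exists (diag_mx (\row_l d1 H l)), (diag_mx (\row_l d2 H l)), (diag_mx (\row_l d3 l)).
split; try exact: diag_mx_is_diag.
move=> i; split.
  move=> j j' hj hj'; rewrite !Bent.
  have [ei|[ei|ei]] := ord3P i; have [ej|[ej|ej]] := ord3P j;
    have [ej'|[ej'|ej']] := ord3P j'; subst i j j';
    rewrite ?eqxx // in hj hj' *;
    rewrite /d2 /pp /cc /alp /bet /=; field; hsolve hH.
move=> j hj; rewrite !Bent -subr_eq0.
have [ei|[ei|ei]] := ord3P i; have [ej|[ej|ej]] := ord3P j; subst i j;
  rewrite ?eqxx // in hj *.
- rewrite (_ : _ - _ = - (pp H o1 * alp H / (H o0 o1 * H o2 o1))).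
    by rewrite oppr_eq0; hsolve hH; rewrite invr_eq0; hsolve hH.
  rewrite /d2 /pp /cc /alp /bet /=; field; hsolve hH.
- rewrite (_ : _ - _ = - (pp H o1 * alp H / (H o0 o1 * H o2 o1))).
    by rewrite oppr_eq0; hsolve hH; rewrite invr_eq0; hsolve hH.
  rewrite /d2 /pp /cc /alp /bet /=; field; hsolve hH.
- rewrite (_ : _ - _ = pp H o1 * gam H / (H o1 o1 * H o2 o1)).
    by hsolve hH; rewrite invr_eq0; hsolve hH.
  rewrite /d2 /pp /cc /alp /bet /gam /=; field; hsolve hH.
- rewrite (_ : _ - _ = pp H o1 * gam H / (H o1 o1 * H o2 o1)).
    by hsolve hH; rewrite invr_eq0; hsolve hH.
  rewrite /d2 /pp /cc /alp /bet /gam /=; field; hsolve hH.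
- rewrite (_ : _ - _ = pp H o2 * del H / (H o1 o2 * H o2 o2)).
    by hsolve hH; rewrite invr_eq0; hsolve hH.
  rewrite /d2 /pp /cc /alp /bet /del /=; field; hsolve hH.
- rewrite (_ : _ - _ = pp H o2 * del H / (H o1 o2 * H o2 o2)).
    by hsolve hH; rewrite invr_eq0; hsolve hH.
  rewrite /d2 /pp /cc /alp /bet /del /=; field; hsolve hH.
Qed.
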